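(* Let $G$ be an additive subgroup of $\mathbb{C}$ with $\mathrm{rank}\,G\ge 2$, and let $V$ be a nontrivial irreducible Harish-Chandra module over $\mathrm{Vir}[G]$. For any finite subset $I$ of $\mathrm{supp}V$ there is a subgroup $G_I$ of $G$ such that: (a) $G_I\cong\mathbb{Z}^k$ for some $k\in\mathbb{N}$; (b) $U(G_I)V_\mu=U(G_I)V_{\mu'}$ and $\mu-\mu'\in G_I$ for all $\mu,\mu'\in I$; (c) $V_\mu$ is an irreducible $U(G_I)_0$-module for every $\mu\in I$.
   Context: $\mathbb{N}$ denotes the positive integers. For a nonzero additive subgroup $G$ of $\mathbb{C}$, $\mathrm{Vir}[G]$ is the complex Lie algebra with basis $\{C,d_x:x\in G\}$ and brackets $[d_x,d_y]=(y-x)d_{x+y}+\delta_{x,-y}\frac{x^3-x}{12}C$, $[C,d_x]=0$; for a subgroup $H\subseteq G$, $\mathrm{Vir}[H]$ is the subalgebra spanned by $C$ and $d_x$, $x\in H$. $U(H)$ denotes the universal enveloping algebra of $\mathrm{Vir}[H]$, and for $a\in\mathbb{C}$, $U(H)_a=\{y\in U(H):[d_0,y]=ay\}$. The rank of a subgroup $A$ of $\mathbb{C}$ is the maximal $r$ such that there exist nonzero $g_1,\dots,g_r\in A$ with $\mathbb{Z}g_1+\dots+\mathbb{Z}g_r$ a direct sum ($\infty$ if no maximum exists). For a module $V$ on which $C$ acts as a scalar, $V_\lambda=\{v:d_0v=\lambda v\}$; $V$ is a weight module if it is the sum of its weight spaces, and Harish-Chandra if moreover all weight spaces are finite-dimensional;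 $\mathrm{supp}V=\{\lambda:V_\lambda\ne0\}$. $V$ is trivial if $\mathrm{Vir}[G]V=0$. *)

(* Defs.v *)
From HB Require Import structures.
From mathcomp Require Import all_boot all_order all_algebra.
From mathcomp Require Import reals.
From mathcomp Require Export complex.

Set Implicit Arguments.
Unset Strict Implicit.
Unset Printing Implicit Defensive.

Import Order.TTheory GRing.Theory Num.Theory.
Local Open Scope ring_scope.

(* A Vir[G]-module on which the central element C acts
   by the scalar c is encoded by the scalar c and the action d x of the basis
   vector d_x, for x in G (values of d outside G are irrelevant). *)

Section VirDefs.
Variable F : fieldType.

Definition subgroup (A : F -> Prop) : Prop :=
  A 0 /\ forall x y, A x -> A y -> A (x - y).

Definition rank_ge (A : F -> Prop) (n : nat) : Prop :=
  exists g : 'I_n -> F,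
    (forall i, A (g i)) /\ (forall i, g i != 0) /\
    (forall m : 'I_n -> int,
        \sum_(i < n) (g i *~ m i) = 0 -> forall i, g i *~ m i = 0).

Definition iso_Zk (A : F -> Prop) (k : nat) : Prop :=
  exists phi : 'rV[int]_k -> F,
    {morph phi : a b / a + b} /\ injective phi /\
    (forall x, A x <-> exists a, phi a = x).

Variable V : lmodType F.

Definition vir_module (G : F -> Prop) (c : F) (d : F -> V -> V) : Prop :=
  (forall x a u v, G x -> d x (a *: u + v) = a *: d x u + d x v) /\
  (forall x y v, G x -> G y ->
     d x (d y v) - d y (d x v) =
       (y - x) *: d (x + y) v
       + ((x == - y)%:R * ((x ^+ 3 - x) / 12%:R) * c) *: v).

Definition weight_space (d : F -> V -> V) (lam : F) (v : V) : Prop :=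
  d 0 v = lam *: v.

Definition weight_module (d : F -> V -> V) : Prop :=
  forall v : V, exists s : seq (F * V),
    (forall p, p \in s -> weight_space d p.1 p.2) /\ v = \sum_(p <- s) p.2.

Definition fin_dim (P : V -> Prop) : Prop :=
  exists s : seq V, (forall w, w \in s -> P w) /\
    forall w, P w -> exists a : seq F,
      w = \sum_(i < size s) a`_i *: s`_i.

Definition harish_chandra (d : F -> V -> V) : Prop :=
  weight_module d /\ forall lam, fin_dim (weight_space d lam).

Definition supp (d : F -> V -> V) (lam : F) : Prop :=
  exists v : V, v != 0 /\ weight_space d lam v.

Definition nontrivial (G : F -> Prop) (c : F) (d : F -> V -> V) : Prop :=
  exists v : V, c *: v != 0 \/ exists x, G x /\ d x v != 0.

Definition subspace (W : V -> Prop) : Prop :=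
  W 0 /\ forall a u v, W u -> W v -> W (a *: u + v).

(* submodule (C acts as a scalar, so stability under C is automatic) *)
Definition submodule (G : F -> Prop) (d : F -> V -> V) (W : V -> Prop) : Prop :=
  subspace W /\ forall x v, G x -> W v -> W (d x v).

Definition irreducible (G : F -> Prop) (d : F -> V -> V) : Prop :=
  (exists v : V, v != 0) /\
  forall W, submodule G d W -> (forall v, W v -> v = 0) \/ (forall v, W v).

Definition act_word (d : F -> V -> V) (xs : seq F) (v : V) : V :=
  foldr (fun x w => d x w) v xs.

(* U(H) W : the span of all u.w, u in U(H), w in W (U(H) is spanned by the
   monomials in C and the d_x, x in H; C acts by a scalar) *)
Definition Uact (H : F -> Prop) (d : F -> V -> V) (W : V -> Prop) (v : V) : Prop :=
  exists s : seq (F * seq F * V),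
    (forall t, t \in s -> (forall x, x \in t.1.2 -> H x) /\ W t.2) /\
    v = \sum_(t <- s) t.1.1 *: act_word d t.1.2 t.2.

(* V_mu is an irreducible U(H)_0-module: U(H)_0 is spanned by the monomials
   d_{x_1}...d_{x_n} C^j with x_i in H and x_1 + ... + x_n = 0 *)
Definition irreducible_U0 (H : F -> Prop) (d : F -> V -> V) (mu : F) : Prop :=
  (exists v : V, v != 0 /\ weight_space d mu v) /\
  forall W : V -> Prop,
    (forall v, W v -> weight_space d mu v) ->
    subspace W ->
    (forall xs v, (forall x, x \in xs -> H x) -> \sum_(x <- xs) x = 0 ->
        W v -> W (act_word d xs v)) ->
    (forall v, W v -> v = 0) \/ (forall v, weight_space d mu v -> W v).

End VirDefs.

(* Main.v *)
Require Import Defs.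
From HB Require Import structures.
From mathcomp Require Import all_boot all_order all_algebra.
From mathcomp Require Import reals complex.
From mathcomp Require Import boolp.
From Stdlib Require Import Classical.
Set Implicit Arguments.
Unset Strict Implicit.
Unset Printing Implicit Defensive.
Import Order.TTheory GRing.Theory Num.Theory.
Local Open Scope ring_scope.
Definition zsub k (H : 'rV[int]_k -> Prop) :=
  H 0 /\ forall x y, H x -> H y -> H (x - y).

Lemma zsub_add k (H : 'rV[int]_k -> Prop) x y : zsub H -> H x -> H y -> H (x + y).
Proof.
move=> [H0 HB] Hx Hy; have := HB x (0 - y) Hx (HB _ _ H0 Hy).
by rewrite sub0r opprK.
Qed.

Lemma zsub_scale k (H : 'rV[int]_k -> Prop) x (n : int) : zsub H -> H x -> H (n *: x).
Proof.
move=> hH Hx.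
have Hn : forall m : nat, H (m%:Z *: x).
  elim=> [|m IH]; first by rewrite scale0r; case: hH.
  by rewrite intS scalerDl scale1r; apply: zsub_add.
case: n => [m|m]; first exact: Hn.
rewrite NegzE scaleNr -sub0r; case: hH => H0 HB; exact: HB.
Qed.

Definition fst n (x : 'rV[int]_(1 + n)) : int := lsubmx x 0 0.
Lemma fstD n (x y : 'rV[int]_(1 + n)) : fst (x + y) = fst x + fst y.
Proof. by rewrite /fst !mxE. Qed.
Lemma fstZ n (a : int) (x : 'rV[int]_(1 + n)) : fst (a *: x) = a * fst x.
Proof. by rewrite /fst !mxE. Qed.
Lemma fstN n (x : 'rV[int]_(1 + n)) : fst (- x) = - fst x.
Proof. by rewrite /fst !mxE. Qed.
Lemma fstR n (a : 'M[int]_(1,1)) (y : 'rV[int]_n) : fst (row_mx a y) = a 0 0.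
Proof. by rewrite /fst row_mxKl. Qed.
Lemma split1 n (x : 'rV[int]_(1 + n)) : x = row_mx (const_mx (fst x)) (rsubmx x).
Proof.
rewrite -{1}(hsubmxK x); congr row_mx; apply/matrixP=> i j.
by rewrite !mxE (ord1 i) (ord1 j) /fst mxE.
Qed.

Definition zfree_prop k (H : 'rV[int]_k -> Prop) :=
  exists j (phi : 'rV[int]_j -> 'rV[int]_k),
    (forall a b, phi (a + b) = phi a + phi b) /\ injective phi /\
    forall x, H x <-> exists a, phi a = x.

Lemma zsub_free_step k : (forall H : 'rV[int]_k -> Prop, zsub H -> zfree_prop H) ->
  forall H : 'rV[int]_(1 + k) -> Prop, zsub H -> zfree_prop H.
Proof.
move=> IH H hH.
pose H0 (y : 'rV[int]_k) := H (row_mx (0 : 'M_(1,1)) y).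
have hH0 : zsub H0.
  split; first by rewrite /H0 row_mx0; case: hH.
  move=> x y; rewrite /H0 => Hx Hy; case: hH => _ HB.
  by have := HB _ _ Hx Hy; rewrite opp_row_mx add_row_mx oppr0 addr0.
have [j0 [phi0 [phi0D [phi0I phi0H]]]] := IH H0 hH0.
case: (classic (forall x, H x -> fst x = 0)) => [Hall|].
  exists j0, (fun a => row_mx 0 (phi0 a)); split.
    by move=> a b; rewrite phi0D add_row_mx addr0.
  split. by move=> a b /eq_row_mx [_ /phi0I].
  move=> x; split.
    move=> Hx; have fx0 := Hall _ Hx.
    have ex : x = row_mx 0 (rsubmx x).
      by rewrite {1}(split1 x) fx0; congr row_mx; apply/matrixP=> i j; rewrite !mxE.
    have : H0 (rsubmx x) by rewrite /H0 -ex.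
    by move/phi0H=> [a Ha]; exists a; rewrite Ha -ex.
  by move=> [a <-]; apply/phi0H; exists a.
move=> Hn; have [x0 Hx00] := not_all_ex_not _ _ Hn; have [Hx0 nz0] := imply_to_and _ _ Hx00.
pose D (t : int) := exists x, H x /\ fst x = t.
have Dopp : forall t, D t -> D (- t).
  move=> t [x [Hx <-]]; exists (0 - x); split; first by case: hH => H00 HB; exact: HB.
  by rewrite /fst !mxE sub0r.
pose Pn := fun n : nat => (0 < n)%N && `[< D n%:Z >].
have exPn : exists n, Pn n.
  exists `|fst x0|%N; apply/andP; split; first by rewrite absz_gt0; apply/eqP.
  apply/asboolP; case: (ltrP 0 (fst x0)) => h.
    by rewrite gez0_abs ?ltW //; exists x0.
  by rewrite lez0_abs //; apply: Dopp; exists x0.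
case: (ex_minnP exPn) => dn /andP [dn0 /asboolP [h0 [Hh0 fh0]]] dmin.
pose d : int := dn%:Z.
have d0 : d != 0 by rewrite /d eqz_nat -lt0n.
have Ddvd : forall x, H x -> fst x = (fst x %/ d)%Z * d.
  move=> x Hx; set t := fst x; set q := (t %/ d)%Z.
  have Hr : H (x - q *: h0).
    by have [_ HB] := hH; apply: HB => //; apply: zsub_scale.
  have fr : fst (x - q *: h0) = (t %% d)%Z.
    rewrite fstD fstN fstZ fh0 -/t.
    by rewrite {1}(divz_eq t d) -/q addrAC subrr add0r.
  have r0 : (0 <= (t %% d)%Z) by apply: modz_ge0.
  have rd : ((t %% d)%Z < d) by apply: ltz_pmod; rewrite /d ltz_nat.
  case: (eqVneq (t %% d)%Z 0) => [e|ne].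
    by rewrite {1}(divz_eq t d) e addr0.
  exfalso.
  have : Pn `|(t %% d)%Z|%N.
    apply/andP; split; first by rewrite absz_gt0.
    by apply/asboolP; rewrite gez0_abs //; exists (x - q *: h0).
  move/dmin; rewrite -lez_nat gez0_abs // -/d.
  by rewrite leNgt rd.
exists (1 + j0)%N; exists (fun v : 'rV[int]_(1 + j0) => fst v *: h0 + row_mx 0 (phi0 (rsubmx v))); split.
  move=> a b; rewrite fstD scalerDl linearD /= phi0D.
  by rewrite -{1}(addr0 (0 : 'M[int]_(1,1))) -add_row_mx addrACA.
split.
  move=> a b e.
  have ef : fst a = fst b.
    have := congr1 (@fst k) e; rewrite !fstD !fstZ !fstR !mxE fh0 !addr0.
    by move/mulIf; apply.
  move: e; rewrite ef => /addrI /eq_row_mx [_ /phi0I er].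
  by rewrite (split1 a) (split1 b) ef er.
move=> x; split.
  move=> Hx; set q := (fst x %/ d)%Z.
  have Hy : H (x - q *: h0).
    by have [_ HB] := hH; apply: HB => //; apply: zsub_scale.
  have fy : fst (x - q *: h0) = 0.
    by rewrite fstD fstN fstZ fh0 {1}(Ddvd _ Hx) -/q subrr.
  have ey : x - q *: h0 = row_mx 0 (rsubmx (x - q *: h0)).
    rewrite {1}(split1 (x - q *: h0)) fy; congr row_mx.
  have : H0 (rsubmx (x - q *: h0)) by rewrite /H0 -ey.
  move/phi0H=> [a Ha].
  exists (row_mx (const_mx q) a); rewrite fstR mxE row_mxKr Ha -ey.
  by rewrite addrC subrK.
move=> [a <-]; apply: zsub_add => //; first exact: zsub_scale.
by apply/phi0H; exists (rsubmx a).
Qed.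

Lemma zsub_free k (H : 'rV[int]_k -> Prop) : zsub H -> zfree_prop H.
Proof.
elim: k H => [|k IH] H hH.
  exists 0%N, id; split=> //; split=> // x; split; first by move=> _; exists x.
  by move=> _; rewrite thinmx0; case: hH.
exact: zsub_free_step.
Qed.
Fixpoint spanZ (K : zmodType) (S : seq K) (x : K) : Prop :=
  match S with
  | [::] => x = 0
  | s :: S' => exists t y, spanZ S' y /\ x = s *~ t + y
  end.

Lemma spanZ0 (K : zmodType) (S : seq K) : spanZ S 0.
Proof. by elim: S => [|s S IH] //=; exists 0, 0; rewrite mulr0z addr0. Qed.

Lemma spanZB (K : zmodType) (S : seq K) x y : spanZ S x -> spanZ S y -> spanZ S (x - y).
Proof.
elim: S x y => [|s S IH] x y /=; first by move=> -> ->; rewrite subrr.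
move=> [t [u [hu ->]]] [t' [u' [hu' ->]]]; exists (t - t'), (u - u'); split; first exact: IH.
by rewrite mulrzBr opprD addrACA.
Qed.

Lemma spanZ_mem (K : zmodType) (S : seq K) x : x \in S -> spanZ S x.
Proof.
elim: S => [|s S IH] //=; rewrite inE => /orP [/eqP ->|hx].
  by exists 1, 0; split; [exact: spanZ0 | rewrite addr0].
by exists 0, x; split; [exact: IH | rewrite mulr0z add0r].
Qed.

Lemma spanZ_sub (K : fieldType) (S : seq K) (G : K -> Prop) :
  subgroup G -> (forall x, x \in S -> G x) -> forall x, spanZ S x -> G x.
Proof.
move=> [G0 GB]; have GD : forall x y, G x -> G y -> G (x + y).
  by move=> x y Gx Gy; have := GB x (0 - y) Gx (GB _ _ G0 Gy); rewrite sub0r opprK.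
have GZ : forall x (n : int), G x -> G (x *~ n).
  move=> x n Gx; have Gn : forall m : nat, G (x *~ m%:Z).
    by elim=> [|m IH]; rewrite ?mulr0z // intS mulrzDr mulr1z; apply: GD.
  case: n => [m|m]; first exact: Gn.
  by rewrite NegzE mulrNz -sub0r; apply: GB.
elim: S => [|s S IH] HS x /=; first by move=> ->.
move=> [t [y [hy ->]]]; apply: GD; first by apply: GZ; apply: HS; rewrite inE eqxx.
by apply: IH => // z hz; apply: HS; rewrite inE hz orbT.
Qed.

Lemma addf0 (K : zmodType) m (f : 'rV[int]_m -> K) :
  (forall a b, f (a + b) = f a + f b) -> f 0 = 0.
Proof.
move=> fD; have := fD 0 0; rewrite addr0 => e.
by apply: (@addrI _ (f 0)); rewrite addr0 -e.
Qed.

Lemma addf_scale (K : zmodType) m (f : 'rV[int]_m -> K) :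
  (forall a b, f (a + b) = f a + f b) -> forall a (n : int), f (n *: a) = f a *~ n.
Proof.
move=> fD; have f0 : f 0 = 0 by apply: addf0.
have fN : forall a, f (- a) = - f a.
  by move=> a; apply/eqP; rewrite -subr_eq0 opprK -fD addNr f0.
have Hn : forall a (k : nat), f (k%:Z *: a) = f a *~ k%:Z.
  move=> a; elim=> [|k IH]; first by rewrite scale0r f0 mulr0z.
  by rewrite intS scalerDl scale1r fD IH mulrzDr mulr1z.
move=> a [k|k]; first exact: Hn.
by rewrite NegzE scaleNr fN Hn mulrNz.
Qed.

Lemma addfB (K : zmodType) m (f : 'rV[int]_m -> K) :
  (forall a b, f (a + b) = f a + f b) -> forall a b, f (a - b) = f a - f b.
Proof.
move=> fD a b; rewrite fD; have := addf_scale fD b (-1).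
by rewrite scaleN1r mulrN1z => ->.
Qed.

Lemma psi_exists (K : numFieldType) (S : seq K) :
  exists m (psi : 'rV[int]_m -> K),
    (forall a b, psi (a + b) = psi a + psi b) /\ injective psi /\
    forall x, spanZ S x -> exists e, psi e = x.
Proof.
elim: S => [|s S [m [psi [psiD [psiI psiS]]]]].
  exists 0%N, (fun _ => 0); split; first by move=> *; rewrite addr0.
  split; first by move=> a b _; rewrite (thinmx0 a) (thinmx0 b).
  by move=> x /= ->; exists 0.
case: (classic (exists n : int, n != 0 /\ exists e, psi e = s *~ n)).
  move=> [n [n0 [e0 he0]]].
  have nR : n%:~R != 0 :> K by rewrite intr_eq0.
  exists m, (fun e => psi e / n%:~R); split.
    by move=> a b; rewrite psiD mulrDl.
  split.
    by move=> a b /= /(mulIf (invr_neq0 nR)) /psiI.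
  move=> x /= [t [y [hy ->]]]; have [ey <-] := psiS _ hy.
  exists (t *: e0 + n *: ey); rewrite psiD !(addf_scale psiD) he0.
  rewrite mulrDl; congr (_ + _).
    by rewrite mulrzAC -[_ *~ n]mulrzr mulfK.
  by rewrite -[_ *~ n]mulrzr mulfK.
move=> Hno; exists (1 + m)%N, (fun v => s *~ fst v + psi (rsubmx v)); split.
  by move=> a b; rewrite fstD mulrzDr linearD /= psiD addrACA.
split.
  move=> a b /= e.
  have ef : fst a = fst b.
    apply/eqP; rewrite -subr_eq0; apply/negP => /negP nz; apply: Hno.
    exists (fst a - fst b); split => //; exists (rsubmx b - rsubmx a).
    rewrite (addfB psiD) mulrzBr; apply/eqP; rewrite subr_eq addrAC eq_sym subr_eq.
    by rewrite e addrC.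
  move: e; rewrite ef => /addrI /psiI er.
  by rewrite (split1 a) (split1 b) ef er.
move=> x /= [t [y [hy ->]]]; have [ey <-] := psiS _ hy.
by exists (row_mx (const_mx t) ey); rewrite fstR mxE row_mxKr.
Qed.

Lemma spanZ_free (K : numFieldType) (S : seq K) :
  exists j (phi : 'rV[int]_j -> K),
    (forall a b, phi (a + b) = phi a + phi b) /\ injective phi /\
    forall x, spanZ S x <-> exists a, phi a = x.
Proof.
have [m [psi [psiD [psiI psiS]]]] := psi_exists S.
pose H' (e : 'rV[int]_m) := spanZ S (psi e).
have hH' : zsub H'.
  split; first by rewrite /H' (addf0 psiD); apply: spanZ0.
  by move=> x y; rewrite /H' (addfB psiD); apply: spanZB.
have [j [phi0 [phi0D [phi0I phi0H]]]] := zsub_free hH'.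
exists j, (fun a => psi (phi0 a)); split; first by move=> a b; rewrite phi0D psiD.
split; first by move=> a b /psiI /phi0I.
move=> x; split.
  move=> hx; have [e he] := psiS _ hx.
  have : H' e by rewrite /H' he.
  by move/phi0H => [a ha]; exists a; rewrite ha.
move=> [a <-]; have : H' (phi0 a) by apply/phi0H; exists a.
done.
Qed.
Section Rep.
Variables (F : fieldType) (V : lmodType F) (G : F -> Prop) (c : F) (d : F -> V -> V).
Hypothesis hG : subgroup G.
Hypothesis Hvir : vir_module G c d.

Local Notation Wt := (weight_space d).

Definition inS (H : F -> Prop) (w : seq F) := forall x, x \in w -> H x.

Lemma G0 : G 0. Proof. by case: hG. Qed.
Lemma GD x y : G x -> G y -> G (x + y).
Proof.
case: hG => g0 gB Gx Gy; have := gB x (0 - y) Gx (gB _ _ g0 Gy).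
by rewrite sub0r opprK.
Qed.
Lemma Gsum w : inS G w -> G (\sum_(x <- w) x).
Proof.
elim: w => [|x w IH] hw; first by rewrite big_nil; apply: G0.
rewrite big_cons; apply: GD; first by apply: hw; rewrite inE eqxx.
by apply: IH => y hy; apply: hw; rewrite inE hy orbT.
Qed.

Lemma dlin x a u v : G x -> d x (a *: u + v) = a *: d x u + d x v.
Proof. by case: Hvir => h _; apply: h. Qed.
Lemma dzero x : G x -> d x 0 = 0.
Proof.
move=> Gx; have := dlin 1 0 0 Gx; rewrite scaler0 addr0 scale1r => e.
by apply: (@addrI _ (d x 0)); rewrite addr0 -e.
Qed.
Lemma dD x u v : G x -> d x (u + v) = d x u + d x v.
Proof. by move=> Gx; have := dlin 1 u v Gx; rewrite !scale1r. Qed.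
Lemma dZ x a u : G x -> d x (a *: u) = a *: d x u.
Proof. by move=> Gx; have := dlin a u 0 Gx; rewrite !addr0 dzero // addr0. Qed.
Lemma dsum x (I : Type) (r : seq I) (P : pred I) (f : I -> V) : G x ->
  d x (\sum_(i <- r | P i) f i) = \sum_(i <- r | P i) d x (f i).
Proof.
move=> Gx; apply: (big_morph (d x)); first by move=> u v; apply: dD.
exact: dzero.
Qed.

Lemma weight_shift x lam v : G x -> Wt lam v -> Wt (lam + x) (d x v).
Proof.
move=> Gx; rewrite /weight_space => hv.
case: Hvir => _ h; have := h 0 x v G0 Gx.
rewrite expr0n /= subr0 subrr mul0r mulr0 mul0r scale0r addr0 add0r.
move/eqP; rewrite subr_eq => /eqP ->; rewrite hv dZ //.
by rewrite scalerDl addrC.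
Qed.

Lemma Wt0 mu : Wt mu 0.
Proof. by rewrite /weight_space (dzero G0) scaler0. Qed.
Lemma WtL mu a u v : Wt mu u -> Wt mu v -> Wt mu (a *: u + v).
Proof.
rewrite /weight_space => hu hv; rewrite (dlin _ _ _ G0) hu hv.
by rewrite scalerDr !scalerA mulrC.
Qed.
Lemma WtZ mu a u : Wt mu u -> Wt mu (a *: u).
Proof. by move=> hu; rewrite -(addr0 (a *: u)); apply: WtL => //; apply: Wt0. Qed.
Lemma WtD mu u v : Wt mu u -> Wt mu v -> Wt mu (u + v).
Proof. by move=> hu hv; rewrite -(scale1r u); apply: WtL. Qed.
Lemma WtB mu u v : Wt mu u -> Wt mu v -> Wt mu (u - v).
Proof. by move=> hu hv; rewrite -scaleN1r addrC; apply: WtL. Qed.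
Lemma Wtsum mu (I : Type) (r : seq I) (P : pred I) (f : I -> V) :
  (forall i, P i -> Wt mu (f i)) -> Wt mu (\sum_(i <- r | P i) f i).
Proof. move=> h; apply: big_ind => //; [exact: Wt0 | exact: WtD]. Qed.

Lemma Wtsum_seq mu (I : eqType) (r : seq I) (P : pred I) (f : I -> V) :
  (forall i, i \in r -> P i -> Wt mu (f i)) -> Wt mu (\sum_(i <- r | P i) f i).
Proof.
move=> h; rewrite big_seq_cond; apply: Wtsum => i /andP [hi hp]; exact: h.
Qed.

Lemma aw_lin w a u v : inS G w ->
  act_word d w (a *: u + v) = a *: act_word d w u + act_word d w v.
Proof.
elim: w => [|x w IH] hw //=; rewrite IH ?dlin //.
  by apply: hw; rewrite inE eqxx.
by move=> y hy; apply: hw; rewrite inE hy orbT.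
Qed.
Lemma aw0 w : inS G w -> act_word d w 0 = 0.
Proof.
move=> hw; have := aw_lin 1 0 0 hw; rewrite scaler0 addr0 scale1r => e.
by apply: (@addrI _ (act_word d w 0)); rewrite addr0 -e.
Qed.
Lemma awD w u v : inS G w -> act_word d w (u + v) = act_word d w u + act_word d w v.
Proof. by move=> hw; have := aw_lin 1 u v hw; rewrite !scale1r. Qed.
Lemma awZ w a u : inS G w -> act_word d w (a *: u) = a *: act_word d w u.
Proof. by move=> hw; have := aw_lin a u 0 hw; rewrite !addr0 aw0 // addr0. Qed.
Lemma awsum w (I : Type) (r : seq I) (P : pred I) (f : I -> V) : inS G w ->
  act_word d w (\sum_(i <- r | P i) f i) = \sum_(i <- r | P i) act_word d w (f i).
Proof.
move=> hw; apply: (big_morph (act_word d w)); first by move=> u v; apply: awD.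
exact: aw0.
Qed.
Lemma aw_wt w mu v : inS G w -> Wt mu v -> Wt (mu + \sum_(x <- w) x) (act_word d w v).
Proof.
elim: w => [|x w IH] hw hv /=; first by rewrite big_nil addr0.
rewrite big_cons addrCA addrC; apply: weight_shift; first by apply: hw; rewrite inE eqxx.
by apply: IH => // y hy; apply: hw; rewrite inE hy orbT.
Qed.

Lemma wt_indep_n mu n (s : seq (F * V)) : (size s <= n)%N ->
  (forall p, p \in s -> Wt p.1 p.2 /\ p.1 != mu) ->
  forall v, Wt mu v -> v = \sum_(p <- s) p.2 -> v = 0.
Proof.
elim: n s => [|n IH] [|[l u] s] //= hsz hs v hv; rewrite ?big_nil // big_cons /= => ev.
have [hu lmu] : Wt l u /\ l != mu by apply: (hs (l, u)); rewrite inE eqxx.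
have hs' : forall p, p \in s -> Wt p.1 p.2 /\ p.1 != mu.
  by move=> p hp; apply: hs; rewrite inE hp orbT.
pose s' := [seq (p.1, (p.1 - l) *: p.2) | p <- s].
have : (mu - l) *: v = 0.
  apply: (IH s'); first by rewrite size_map.
  - move=> p /mapP [q hq ->] /=; have [hq1 hq2] := hs' _ hq; split => //.
    exact: WtZ.
  - exact: WtZ.
  - rewrite big_map /= scalerBl -{1}hv ev (dD _ _ G0) hu.
    rewrite (dsum _ _ _ G0) scalerDr opprD addrACA subrr add0r scaler_sumr -sumrB.
    apply: eq_big_seq => p hp; have [hp1 _] := hs' _ hp.
    by rewrite hp1 scalerBl.
move/eqP; rewrite scaler_eq0 subr_eq0 eq_sym (negbTE lmu) /= => /eqP //.
Qed.

Lemma wt_indep mu (s : seq (F * V)) :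
  (forall p, p \in s -> Wt p.1 p.2 /\ p.1 != mu) ->
  forall v, Wt mu v -> v = \sum_(p <- s) p.2 -> v = 0.
Proof. exact: (@wt_indep_n mu (size s)). Qed.

Lemma wt_proj mu (s : seq (F * V)) v :
  (forall p, p \in s -> Wt p.1 p.2) -> Wt mu v -> v = \sum_(p <- s) p.2 ->
  v = \sum_(p <- s | p.1 == mu) p.2.
Proof.
move=> hs hv ev; apply/eqP; rewrite -subr_eq0; apply/eqP.
apply: (@wt_indep mu [seq p <- s | p.1 != mu]).
- move=> p; rewrite mem_filter => /andP [hp hp']; split => //; exact: hs.
- apply: WtB => //; apply: Wtsum_seq => p hp /eqP <-; exact: hs.
- by rewrite big_filter ev (bigID (fun p => p.1 == mu)) /= addrAC subrr add0r.
Qed.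
Section UactL.
Variables (H : F -> Prop) (W : V -> Prop).

Lemma U1 : Uact H d W 0.
Proof. by exists [::]; split => //; rewrite big_nil. Qed.

Lemma U2 a u v : Uact H d W u -> Uact H d W v -> Uact H d W (a *: u + v).
Proof.
move=> [su [hsu ->]] [sv [hsv ->]].
exists ([seq (a * t.1.1, t.1.2, t.2) | t <- su] ++ sv); split.
  move=> t; rewrite mem_cat => /orP [/mapP [t' ht' ->]|ht] /=; [exact: hsu | exact: hsv].
by rewrite big_cat big_map /= scaler_sumr; congr (_ + _); apply: eq_bigr => t _; rewrite scalerA.
Qed.

Lemma UD u v : Uact H d W u -> Uact H d W v -> Uact H d W (u + v).
Proof. by move=> hu hv; rewrite -(scale1r u); apply: U2. Qed.

Lemma Usum (I : Type) (r : seq I) (P : pred I) (f : I -> V) :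
  (forall i, P i -> Uact H d W (f i)) -> Uact H d W (\sum_(i <- r | P i) f i).
Proof. move=> h; apply: big_ind => //; [exact: U1 | exact: UD]. Qed.

Lemma U3 v : W v -> Uact H d W v.
Proof.
move=> hv; exists [:: (1, [::], v)]; split; last by rewrite big_seq1 scale1r.
by move=> t; rewrite inE => /eqP -> /=.
Qed.

Hypothesis HG : forall x, H x -> G x.

Lemma U4 x v : H x -> Uact H d W v -> Uact H d W (d x v).
Proof.
move=> Hx [s [hs ->]]; exists [seq (t.1.1, x :: t.1.2, t.2) | t <- s]; split.
  move=> t /mapP [t' ht' ->] /=; have [h1 h2] := hs _ ht'; split => // y.
  by rewrite inE => /orP [/eqP ->|]; [| exact: h1].
rewrite (dsum _ _ _ (HG Hx)) big_map; apply: eq_bigr => t _ /=.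
by rewrite dZ //; apply: HG.
Qed.

Lemma U6 ws v : inS H ws -> Uact H d W v -> Uact H d W (act_word d ws v).
Proof.
elim: ws => [|x ws IH] hws hv //=; apply: U4; first by apply: hws; rewrite inE eqxx.
by apply: IH => // y hy; apply: hws; rewrite inE hy orbT.
Qed.

End UactL.

Lemma U5 H W W' v : (forall x, H x -> G x) -> (forall w, W w -> Uact H d W' w) ->
  Uact H d W v -> Uact H d W' v.
Proof.
move=> HG hW [s [hs ->]]; rewrite big_seq; apply: Usum => t ht.
have [h1 h2] := hs _ ht; rewrite -(addr0 (_ *: _)); apply: U2; last exact: U1.
by apply: U6 => //; apply: hW.
Qed.

Lemma Umono H H' W v : (forall x, H x -> H' x) -> Uact H d W v -> Uact H' d W v.
Proof.
move=> hH [s [hs ->]]; exists s; split => // t ht; have [h1 h2] := hs _ ht.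
by split => // x hx; apply: hH; apply: h1.
Qed.

Lemma Uact_sub W : submodule G d (Uact G d W).
Proof.
split; first by split; [exact: U1 | move=> a u v; apply: U2].
by move=> x v Gx; apply: U4.
Qed.

Lemma Uact_all W : irreducible G d -> (exists w, w != 0 /\ W w) -> forall v, Uact G d W v.
Proof.
move=> [_ hirr] [w [w0 hw]]; case: (hirr _ (Uact_sub W)) => // h.
by move: w0; rewrite (h w) ?eqxx //; apply: U3.
Qed.
Lemma irrG mu W : irreducible G d -> (forall v, W v -> Wt mu v) -> subspace W ->
  (forall xs v, inS G xs -> \sum_(x <- xs) x = 0 -> W v -> W (act_word d xs v)) ->
  (exists w, w != 0 /\ W w) -> forall v, Wt mu v -> W v.
Proof.
move=> hirr hWt [W0 WL] hcl hw v hv.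
have [s [hs ev]] := Uact_all hirr hw v.
pose f (t : F * seq F * V) := (mu + \sum_(x <- t.1.2) x, t.1.1 *: act_word d t.1.2 t.2).
have e2 : v = \sum_(p <- map f s | p.1 == mu) p.2.
  apply: wt_proj => //; last by rewrite big_map.
  move=> p /mapP [t ht ->] /=; have [h1 h2] := hs _ ht.
  by apply: WtZ; apply: aw_wt => //; apply: hWt.
rewrite e2 big_map big_seq_cond; apply: big_ind => //.
- by move=> x y hx hy; rewrite -(scale1r x); apply: WL.
- move=> t /andP [ht /eqP e]; have [h1 h2] := hs _ ht.
  rewrite /f /= -(addr0 (_ *: _)); apply: WL => //; apply: hcl => //.
  by apply: (@addrI _ mu); rewrite addr0.
Qed.

Lemma diff_in_G mu mu' : irreducible G d -> supp d mu -> supp d mu' -> G (mu - mu').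
Proof.
move=> hirr [v [v0 hv]] [w [w0 hw]].
have [s [hs ev]] := @Uact_all (Wt mu') hirr (ex_intro _ w (conj w0 hw)) v.
pose f (t : F * seq F * V) := (mu' + \sum_(x <- t.1.2) x, t.1.1 *: act_word d t.1.2 t.2).
case: (boolP (has (fun t : F * seq F * V => mu' + \sum_(x <- t.1.2) x == mu) s)).
  move/hasP=> [t ht /eqP e]; have [h1 _] := hs _ ht.
  have -> : mu - mu' = \sum_(x <- t.1.2) x by rewrite -e addrAC subrr add0r.
  exact: Gsum.
move/hasPn=> hn; exfalso; move/negP: v0; apply; apply/eqP.
apply: (@wt_indep mu (map f s)) => //; last by rewrite big_map.
move=> p /mapP [t ht ->] /=; have [h1 h2] := hs _ ht; split; last exact: hn.
by apply: WtZ; apply: aw_wt.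
Qed.
Definition Z0 (H : F -> Prop) (w : seq F) := inS H w /\ \sum_(x <- w) x = 0.

Section FD.
Variables (mu : F) (sp : seq V).
Hypothesis hsp : forall w, w \in sp -> Wt mu w.
Hypothesis hspan : forall w, Wt mu w -> exists a : seq F, w = \sum_(i < size sp) a`_i *: sp`_i.

Definition rep (w : seq F) (M : 'M[F]_(size sp)) :=
  forall j : 'I_(size sp), act_word d w sp`_j = \sum_(i < size sp) M j i *: sp`_i.

Lemma rep_exists w : Z0 G w -> exists M, rep w M.
Proof.
move=> [hw hs0].
have : forall j : 'I_(size sp), exists a : seq F,
    act_word d w sp`_j = \sum_(i < size sp) a`_i *: sp`_i.
  move=> j; apply: hspan; have := aw_wt hw (hsp (mem_nth 0 (ltn_ord j))).
  by rewrite hs0 addr0.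
move/fin_all_exists=> [a ha]; exists (\matrix_(j, i) (a j)`_i) => j; rewrite ha.
by apply: eq_bigr => i _; rewrite mxE.
Qed.

Definition stack (Fs : seq (seq F * 'M[F]_(size sp))) : 'M[F]_(size Fs, size sp * size sp) :=
  \matrix_(k, l) mxvec (nth ([::], 0) Fs k).2 0 l.

Definition good (Fs : seq (seq F * 'M[F]_(size sp))) :=
  forall p, p \in Fs -> Z0 G p.1 /\ rep p.1 p.2.

Lemma fd_words : exists Fs, good Fs /\
  forall w M, Z0 G w -> rep w M -> exists cf : 'I_(size Fs) -> F,
    forall i j, M i j = \sum_(k < size Fs) cf k * (nth ([::], 0) Fs k).2 i j.
Proof.
pose Pr r := `[< exists Fs, good Fs /\ \rank (stack Fs) = r >].
have ex0 : exists r, Pr r.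
  exists 0%N; apply/asboolP; exists [::]; split; first by move=> p; rewrite in_nil.
  by rewrite (flatmx0 (stack [::])) mxrank0.
have ub : forall r, Pr r -> (r <= size sp * size sp)%N.
  by move=> r /asboolP [Fs [_ <-]]; apply: rank_leq_col.
case: (ex_maxnP ex0 ub) => r /asboolP [Fs [gFs rFs]] rmax.
exists Fs; split => // w M hw hM.
pose Fs' := (w, M) :: Fs.
have gFs' : good Fs'.
  by move=> p; rewrite inE => /orP [/eqP -> //|]; apply: gFs.
have sub : (stack Fs <= stack Fs')%MS.
  apply/row_subP => k.
  have -> : row k (stack Fs) = row (lift ord0 k) (stack Fs').
    by apply/rowP => l; rewrite !mxE lift0.
  exact: row_sub.
have r' : (\rank (stack Fs') <= r)%N by apply: rmax; apply/asboolP; exists Fs'.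
have sub' : (stack Fs' <= stack Fs)%MS.
  have [le1 eq1] := mxrank_leqif_sup sub.
  by rewrite -eq1 rFs eqn_leq -{1}rFs le1 r'.
have vM : (mxvec M <= stack Fs)%MS.
  apply: submx_trans sub'.
  have -> : mxvec M = row ord0 (stack Fs') by apply/rowP => l; rewrite !mxE.
  exact: row_sub.
case/submxP: vM => D eD; exists (fun k => D 0 k) => i j.
rewrite -(mxvecE M) eD !mxE; apply: eq_bigr => k _; by rewrite mxE mxvecE.
Qed.

Lemma closure_Fs (Fs : seq (seq F * 'M[F]_(size sp))) (W : V -> Prop) : good Fs ->
  (forall w M, Z0 G w -> rep w M -> exists cf : 'I_(size Fs) -> F,
    forall i j, M i j = \sum_(k < size Fs) cf k * (nth ([::], 0) Fs k).2 i j) ->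
  (forall v, W v -> Wt mu v) -> subspace W ->
  (forall p, p \in Fs -> forall u, W u -> W (act_word d p.1 u)) ->
  forall w, Z0 G w -> forall u, W u -> W (act_word d w u).
Proof.
move=> gFs hFs hWt [W0 WL] hcl w hw u hu.
have [M hM] := rep_exists hw; have [cf hcf] := hFs _ _ hw hM.
have [a ea] := hspan (hWt _ hu).
pose N k := nth ([::], 0) Fs k.
have gk : forall k : 'I_(size Fs), N k \in Fs by move=> k; apply: mem_nth.
have gN : forall k : 'I_(size Fs), Z0 G (N k).1 /\ rep (N k).1 (N k).2 by move=> k; apply: gFs; apply: gk.
have L : act_word d w (\sum_(j < size sp) a`_j *: sp`_j) =
   \sum_(j < size sp) \sum_(i < size sp) \sum_(k < size Fs)
      (a`_j * (cf k * (N k).2 j i)) *: sp`_i.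
  rewrite awsum; last exact: hw.1.
  apply: eq_bigr => j _; rewrite awZ; last exact: hw.1.
  rewrite hM scaler_sumr; apply: eq_bigr => i _.
  rewrite hcf scaler_suml scaler_sumr; apply: eq_bigr => k _; by rewrite scalerA.
have R : \sum_(k < size Fs) cf k *: act_word d (N k).1 (\sum_(j < size sp) a`_j *: sp`_j) =
   \sum_(k < size Fs) \sum_(j < size sp) \sum_(i < size sp)
      (a`_j * (cf k * (N k).2 j i)) *: sp`_i.
  apply: eq_bigr => k _; have [[hk1 _] hk2] := gN k.
  rewrite awsum // scaler_sumr; apply: eq_bigr => j _.
  rewrite awZ // hk2 !scaler_sumr; apply: eq_bigr => i _.
  by rewrite !scalerA mulrA (mulrC (cf k)).
have key : act_word d w u = \sum_(k < size Fs) cf k *: act_word d (N k).1 u.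
  rewrite ea L R [RHS]exchange_big /=; apply: eq_bigr => j _.
  by rewrite [RHS]exchange_big.
rewrite key; apply: big_ind => //.
- by move=> x y hx hy; rewrite -(scale1r x); apply: WL.
- move=> k _; rewrite -(addr0 (_ *: _)); apply: WL => //.
  exact: hcl (gk k) u hu.
Qed.
End FD.
Lemma collect (T : eqType) (A : seq T) (P : T -> (F -> Prop) -> Prop) :
  (forall a, a \in A -> exists L : seq F, inS G L /\ forall H, inS H L -> P a H) ->
  exists L, inS G L /\ forall H, inS H L -> forall a, a \in A -> P a H.
Proof.
elim: A => [|a A IH] hA; first by exists [::]; split => // H _ a; rewrite in_nil.
have [La [hLa PLa]] := hA a (mem_head a A).
have [LA [hLA PLA]] : exists L, inS G L /\ forall H, inS H L -> forall b, b \in A -> P b H.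
  by apply: IH => b hb; apply: hA; rewrite inE hb orbT.
exists (La ++ LA); split.
  by move=> x; rewrite mem_cat => /orP [] hx; [apply: hLa | apply: hLA].
move=> H hH b; rewrite inE => /orP [/eqP ->|hb].
  by apply: PLa => x hx; apply: hH; rewrite mem_cat hx.
by apply: PLA => // x hx; apply: hH; rewrite mem_cat hx orbT.
Qed.

Lemma pair_ok mu mu' : irreducible G d -> supp d mu -> supp d mu' ->
  fin_dim (Wt mu) -> fin_dim (Wt mu') ->
  exists L, inS G L /\ forall H, inS H L ->
    [/\ irreducible_U0 H d mu, (forall v, Wt mu' v -> Uact H d (Wt mu) v) & H (mu - mu')].
Proof.
move=> hirr smu smu' [sp [hsp hspan]] [sp' [hsp' hspan']].
have [Fs [gFs hFs]] := fd_words sp.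
pose L1 := flatten [seq p.1 | p <- Fs].
have [L2 [hL2 PL2]] : exists L, inS G L /\ forall H, inS H L ->
    forall s, s \in sp' -> Uact H d (Wt mu) s.
  apply: (@collect V sp' (fun s H => Uact H d (Wt mu) s)) => s hs.
  have [T [hT eT]] := Uact_all hirr smu s.
  exists (flatten [seq t.1.2 | t <- T]); split.
    move=> x /flattenP [l /mapP [t ht ->] hx]; exact: (hT _ ht).1 x hx.
  move=> H hH; exists T; split => // t ht; split; last exact: (hT _ ht).2.
  move=> x hx; apply: hH; apply/flattenP; exists t.1.2 => //; by apply/mapP; exists t.
exists (L1 ++ L2 ++ [:: mu - mu']); split.
  move=> x; rewrite !mem_cat => /orP [|/orP []].
  - move=> /flattenP [l /mapP [p hp ->] hx]; exact: (gFs p hp).1.1 x hx.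
  - exact: hL2.
  - by rewrite inE => /eqP ->; apply: diff_in_G.
move=> H hH.
have hH1 : inS H L1 by move=> x hx; apply: hH; rewrite mem_cat hx.
have hH2 : inS H L2 by move=> x hx; apply: hH; rewrite !mem_cat hx orbT.
have hH3 : H (mu - mu') by apply: hH; rewrite !mem_cat mem_head !orbT.
split => //.
- split; first exact: smu.
  move=> W hWt hsub hcl.
  case: (classic (exists w, w != 0 /\ W w)) => [hw|hnw]; last first.
    left => v hv; case: (eqVneq v 0) => // nz; exfalso; apply: hnw; by exists v.
  right; apply: (irrG hirr hWt hsub) => // xs v hxs hs0 hv.
  apply: (@closure_Fs mu sp hsp hspan Fs W gFs hFs hWt hsub) => //.
  move=> p hp u hu; apply: hcl => //; last exact: (gFs p hp).1.2.
  move=> x hx; apply: hH1; apply/flattenP; exists p.1 => //; by apply/mapP; exists p.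
- move=> v hv; have [a ea] := hspan' _ hv; rewrite ea; apply: Usum => i _.
  rewrite -(addr0 (_ *: _)); apply: U2; last exact: U1.
  by apply: PL2 => //; apply: mem_nth.
Qed.
End Rep.

Theorem lemma3p1 (R : realType) (G : R[i] -> Prop) (V : lmodType R[i])
  (c : R[i]) (d : R[i] -> V -> V) :
  subgroup G -> rank_ge G 2 ->
  vir_module G c d -> harish_chandra d ->
  nontrivial G c d -> irreducible G d ->
  forall I : seq R[i], (forall mu, mu \in I -> supp d mu) ->
  exists GI : R[i] -> Prop,
    [/\ subgroup GI, (forall x, GI x -> G x),
        (exists k : nat, (0 < k)%N /\ iso_Zk GI k),
        (forall mu mu', mu \in I -> mu' \in I ->
           (forall v, Uact GI d (weight_space d mu) v <->
                      Uact GI d (weight_space d mu') v)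
           /\ GI (mu - mu'))
      & (forall mu, mu \in I -> irreducible_U0 GI d mu)].
Proof.
move=> hG hrank hvir [_ hfin] _ hirr I hI.
have [g [gG [gnz _]]] := hrank.
pose g0 := g ord0.
have [L [hLG PL]] : exists L, inS G L /\ forall H, inS H L ->
   forall p, p \in [seq (x, y) | x <- I, y <- I] ->
   [/\ irreducible_U0 H d p.1,
       (forall v, weight_space d p.2 v -> Uact H d (weight_space d p.1) v)
     & H (p.1 - p.2)].
  apply: collect => p /allpairsP [[x y] [hx hy ->]] /=.
  by apply: (pair_ok hG hvir) => //; apply: hI.
pose GI := spanZ (g0 :: L).
have hGI : inS GI L by move=> x hx; apply: spanZ_mem; rewrite inE hx orbT.
have hGIG : forall x, GI x -> G x.
  apply: spanZ_sub => // x; rewrite inE => /orP [/eqP ->|]; [exact: gG | exact: hLG].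
have mem2 : forall x y, x \in I -> y \in I -> (x, y) \in [seq (x, y) | x <- I, y <- I].
  by move=> x y hx hy; apply/allpairsP; exists (x, y).
exists GI; split.
- by split; [exact: spanZ0 | move=> x y; apply: spanZB].
- exact: hGIG.
- have [j [phi [phiD [phiI phiH]]]] := spanZ_free (g0 :: L).
  case: j phi phiD phiI phiH => [|j] phi phiD phiI phiH.
    have [a ha] := (phiH g0).1 (spanZ_mem (mem_head _ _)).
    by move: ha; rewrite (thinmx0 a) (addf0 phiD) => e; move: (gnz ord0); rewrite -/g0 -e eqxx.
  by exists j.+1; split => //; exists phi.
- move=> mu mu' hmu hmu'.
  have [_ h1 h3] := PL GI hGI _ (mem2 _ _ hmu hmu').
  have [_ h2 _] := PL GI hGI _ (mem2 _ _ hmu' hmu).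
  split => // v; split; apply: (U5 hvir hGIG) => //.
- by move=> mu hmu; have [] := PL GI hGI _ (mem2 _ _ hmu hmu).
Qed.
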